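(* Fix a leader policy $\pi$, let $\nu^\pi$ be its quantal response under the true model, let $\tilde\nu=\{\tilde\nu_h(\cdot\mid s)\in\Delta(\mathcal B)\}$ be any follower policy, and let $\tilde U_h:\mathcal S\times\mathcal A\times\mathcal B\to\mathbb R$, $\tilde W_h:\mathcal S\to\mathbb R$ ($h\in[H]$) be arbitrary functions with $\|\tilde U_h\|_\infty\le H$, and set $\tilde U_{H+1}=0$, $\tilde W_{H+1}=0$. Then $$\mathbb E_{s_1\sim\rho_0}\bigl[(T_1^{\pi,\tilde\nu}\tilde U_1)(s_1)\bigr]-J(\pi)\le\sum_{h=1}^H\mathbb E\bigl[(\tilde U_h-u_h)(s_h,a_h,b_h)-(T_{h+1}^{\pi,\tilde\nu}\tilde U_{h+1})(s_{h+1})\bigr]+\sum_{h=1}^H H\,\mathbb E\bigl[\|\tilde\nu_h(\cdot\mid s_h)-\nu_h^\pi(\cdot\mid s_h)\|_1\bigr],$$ and $$\mathbb E_{s_1\sim\rho_0}\bigl[\tilde W_1(s_1)\bigr]-J(\pi)\le\sum_{h=1}^H\mathbb E\bigl[(\tilde U_h-u_h)(s_h,a_h,b_h)-\tilde W_{h+1}(s_{h+1})\bigr]+\sum_{h=1}^H\mathbb E\bigl[\tilde W_h(s_h)-(T_h^{\pi,\tilde\nu}\tilde U_h)(s_h)\bigr]+\sum_{h=1}^H H\,\mathbb E\bigl[\|\tilde\nu_h(\cdot\mid s_h)-\nu_h^\pi(\cdot\mid s_h)\|_1\bigr],$$ where $\mathbb E$ is over a trajectory generated by $(\pi,\nu^\pi)$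 on the true model.
   Context: Episodic leader–follower Markov game (true model): state space $\mathcal S$, action sets $\mathcal A$ (leader), $\mathcal B$ (follower), horizon $H$, initial distribution $\rho_0$, transitions $P_h(\cdot\mid s,a,b)$, leader rewards $u_h\in[0,1]$, follower rewards $r_h\in[0,1]$. Leader policy: $\pi_h(\cdot\mid s,b)\in\Delta(\mathcal A)$; follower policy $\nu_h(\cdot\mid s)\in\Delta(\mathcal B)$; at step $h$, $b_h\sim\nu_h(\cdot\mid s_h)$, $a_h\sim\pi_h(\cdot\mid s_h,b_h)$, $s_{h+1}\sim P_h(\cdot\mid s_h,a_h,b_h)$. With $\eta>0,\gamma\in[0,1]$, the quantal response $\nu^\pi$ is defined by backward recursion: $V_{H+1}^\pi=0$, $Q_h^\pi(s,b)=\sum_a\pi_h(a\mid s,b)\bigl(r_h(s,a,b)+\gamma\mathbb E_{s'\sim P_h(\cdot\mid s,a,b)}V_{h+1}^\pi(s')\bigr)$, $V_h^\pi(s)=\eta^{-1}\log\sum_b e^{\eta Q_h^\pi(s,b)}$, $\nu_h^\pi(b\mid s)=\exp(\eta(Q_h^\pi(s,b)-V_h^\pi(s)))$. Leader values: $W_{H+1}^\pi=0$, $U_h^\pi=u_h+P_hW_{h+1}^\pi$, $W_h^\pi=T_h^{\pi,\nu^\pi}U_h^\pi$, $J(\pi)=\mathbb E_{s_1\sim\rho_0}W_1^\pi(s_1)$, where for a follower policy $\nu$ the operator is $(T_h^{\pi,\nu}f)(s)=\sum_{a,b}f(s,a,b)\pi_h(a\mid s,b)\nu_h(b\mid s)$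 (and $T_{H+1}^{\pi,\nu}\tilde U_{H+1}=0$). *)

(* Defs.v *)
From HB Require Import structures.
From mathcomp Require Import all_boot all_order all_algebra.
From mathcomp Require Import all_classical all_reals all_analysis.
Set Implicit Arguments. Unset Strict Implicit. Unset Printing Implicit Defensive.
Import Order.TTheory GRing.Theory Num.Theory.
Local Open Scope ring_scope.

(* Conventions: steps are natural numbers h, meaningful for 1 <= h <= H
   (H+1 is the terminal step).
   pi  h s b a   = pi_h(a | s, b)          (leader policy)
   nu  h s b     = nu_h(b | s)             (follower policy)
   P   h s a b s'= P_h(s' | s, a, b)
   u r h s a b   = leader / follower rewards. *)

Section Game.
Variables (R : realType) (S A B : finType) (H : nat).
Variables (rho0 : S -> R) (P : nat -> S -> A -> B -> S -> R)
          (u r : nat -> S -> A -> B -> R) (eta gamma : R).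

Definition Top (pi : nat -> S -> B -> A -> R) (nu : nat -> S -> B -> R)
    (h : nat) (f : S -> A -> B -> R) (s : S) : R :=
  \sum_(a : A) \sum_(b : B) f s a b * pi h s b a * nu h s b.

Variable pi : nat -> S -> B -> A -> R.

Definition Qof (h : nat) (Vnext : S -> R) (s : S) (b : B) : R :=
  \sum_(a : A) pi h s b a *
     (r h s a b + gamma * \sum_(s' : S) P h s a b s' * Vnext s').

(* Vrem k = V_{H+1-k}  (k = number of remaining steps) *)
Fixpoint Vrem (k : nat) : S -> R :=
  match k with
  | 0 => fun _ => 0
  | k'.+1 => fun s =>
      ln (\sum_(b : B) expR (eta * Qof (H - k') (Vrem k') s b)) / eta
  end.

Definition Vqr (h : nat) : S -> R := Vrem (H.+1 - h).
Definition Qqr (h : nat) (s : S) (b : B) : R := Qof h (Vqr h.+1) s b.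
Definition nuqr (h : nat) (s : S) (b : B) : R :=
  expR (eta * (Qqr h s b - Vqr h s)).

(* leader values: Wrem k = W^pi_{H+1-k} *)
Fixpoint Wrem (k : nat) : S -> R :=
  match k with
  | 0 => fun _ => 0
  | k'.+1 => Top pi nuqr (H - k')
      (fun s a b => u (H - k') s a b + \sum_(s' : S) P (H - k') s a b s' * Wrem k' s')
  end.

Definition Wpi (h : nat) : S -> R := Wrem (H.+1 - h).
Definition Upi (h : nat) (s : S) (a : A) (b : B) : R :=
  u h s a b + \sum_(s' : S) P h s a b s' * Wpi h.+1 s'.
Definition Jpi : R := \sum_(s : S) rho0 s * Wpi 1 s.

(* state distribution of s_{n+1} along a trajectory generated by (pi, nu^pi) *)
Fixpoint occ (n : nat) : S -> R :=
  match n with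
  | 0 => rho0
  | n'.+1 => fun s' => \sum_(s : S) \sum_(b : B) \sum_(a : A)
        occ n' s * nuqr n'.+1 s b * pi n'.+1 s b a * P n'.+1 s a b s'
  end.

Definition dstate (h : nat) : S -> R := occ h.-1.

Definition Etraj (h : nat) (f : S -> A -> B -> S -> R) : R :=
  \sum_(s : S) \sum_(b : B) \sum_(a : A) \sum_(s' : S)
    dstate h s * nuqr h s b * pi h s b a * P h s a b s' * f s a b s'.

End Game.

Definition is_distr (R : realType) (T : finType) (p : T -> R) : Prop :=
  (forall x, 0 <= p x) /\ \sum_(x : T) p x = 1.

(* Main.v *)
Require Import Defs.
From HB Require Import structures.
From mathcomp Require Import all_boot all_order all_algebra.
From mathcomp Require Import all_classical all_reals all_analysis.
From mathcomp Require Import ring lra.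
Import Order.TTheory GRing.Theory Num.Theory.
Local Open Scope ring_scope.


Definition EE (R : realType) (S A B : finType) (d : S -> R) (nu : S -> B -> R)
  (p : S -> B -> A -> R) (Pk : S -> A -> B -> S -> R) (F : S -> A -> B -> S -> R) : R :=
  \sum_(s : S) \sum_(b : B) \sum_(a : A) \sum_(s' : S)
    d s * nu s b * p s b a * Pk s a b s' * F s a b s'.
Arguments EE {R S A B}.

Lemma EE_B (R : realType) (S A B : finType) (d : S -> R) (nu : S -> B -> R) (p : S -> B -> A -> R) (Pk : S -> A -> B -> S -> R) (F G : S -> A -> B -> S -> R) :
  EE d nu p Pk (fun s a b s' => F s a b s' - G s a b s') =
  EE d nu p Pk F - EE d nu p Pk G.
Proof.
rewrite /EE -sumrB; apply: eq_bigr => s _; rewrite -sumrB; apply: eq_bigr => b _.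
rewrite -sumrB; apply: eq_bigr => a _; rewrite -sumrB; apply: eq_bigr => s' _.
by rewrite mulrBr.
Qed.

Lemma EE_red (R : realType) (S A B : finType) (d : S -> R) (nu : S -> B -> R) (p : S -> B -> A -> R) (Pk : S -> A -> B -> S -> R) (F : S -> A -> B -> S -> R) :
  EE d nu p Pk F = \sum_s \sum_b \sum_a d s * nu s b * p s b a *
       (\sum_s' Pk s a b s' * F s a b s').
Proof.
rewrite /EE; apply: eq_bigr => s _; apply: eq_bigr => b _; apply: eq_bigr => a _.
by rewrite mulr_sumr; apply: eq_bigr => s' _; rewrite !mulrA.
Qed.

Lemma EE_const (R : realType) (S A B : finType) (d : S -> R) (nu : S -> B -> R) (p : S -> B -> A -> R) (Pk : S -> A -> B -> S -> R) (f : S -> A -> B -> R) :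
  (forall s a b, \sum_s' Pk s a b s' = 1) ->
  EE d nu p Pk (fun s a b _ => f s a b) =
  \sum_s d s * \sum_a \sum_b f s a b * p s b a * nu s b.
Proof.
move=> HP; rewrite EE_red; apply: eq_bigr => s _.
rewrite exchange_big mulr_sumr; apply: eq_bigr => b _.
rewrite mulr_sumr; apply: eq_bigr => a _.
by rewrite -mulr_suml HP mul1r; ring.
Qed.

Lemma EE_next (R : realType) (S A B : finType) (d : S -> R) (nu : S -> B -> R) (p : S -> B -> A -> R) (Pk : S -> A -> B -> S -> R) (g : S -> R) :
  EE d nu p Pk (fun _ _ _ s' => g s') =
  \sum_s' (\sum_s \sum_b \sum_a d s * nu s b * p s b a * Pk s a b s') * g s'.
Proof.
rewrite /EE; symmetry.
under eq_bigr => s' _ do rewrite mulr_suml; rewrite exchange_big; apply: eq_bigr => s _.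
under eq_bigr => s' _ do rewrite mulr_suml; rewrite exchange_big; apply: eq_bigr => b _.
under eq_bigr => s' _ do rewrite mulr_suml; rewrite exchange_big; apply: eq_bigr => a _.
done.
Qed.

Lemma EE_PW' (R : realType) (S A B : finType) (d : S -> R) (nu : S -> B -> R) (p : S -> B -> A -> R) (Pk : S -> A -> B -> S -> R) (g : S -> R) :
  (forall s a b, \sum_s' Pk s a b s' = 1) ->
  EE d nu p Pk (fun s a b _ => \sum_s' Pk s a b s' * g s') = EE d nu p Pk (fun _ _ _ s' => g s').
Proof.
move=> HP; rewrite !EE_red; apply: eq_bigr => s _; apply: eq_bigr => b _; apply: eq_bigr => a _.
by rewrite -mulr_suml HP mul1r.
Qed.

Lemma EE_state (R : realType) (S A B : finType) (d : S -> R) (nu : S -> B -> R) (p : S -> B -> A -> R) (Pk : S -> A -> B -> S -> R) (g : S -> R) :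
  (forall s a b, \sum_s' Pk s a b s' = 1) ->
  (forall s b, \sum_a p s b a = 1) -> (forall s, \sum_b nu s b = 1) ->
  EE d nu p Pk (fun s _ _ _ => g s) = \sum_s d s * g s.
Proof.
move=> HP Hp Hn; rewrite (@EE_const R S A B d nu p Pk (fun s (_ : A) (_ : B) => g s) HP).
apply: eq_bigr => s _; congr (_ * _).
rewrite exchange_big -[RHS]mulr1 -(Hn s) mulr_sumr; apply: eq_bigr => b _.
by rewrite -mulr_suml -mulr_sumr Hp mulr1.
Qed.

Lemma Top_diff (R : realType) (A B : finType) (f : A -> B -> R) (p : B -> A -> R)
  (nt nq : B -> R) (c : R) :
  (forall b a, 0 <= p b a) -> (forall b, \sum_a p b a = 1) -> (forall a b, `|f a b| <= c) ->
  \sum_a \sum_b f a b * p b a * nt b - \sum_a \sum_b f a b * p b a * nq b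
  <= c * \sum_b `|nt b - nq b|.
Proof.
move=> Hp0 Hp1 Hf.
have -> : \sum_a \sum_b f a b * p b a * nt b - \sum_a \sum_b f a b * p b a * nq b =
   \sum_b (nt b - nq b) * \sum_a f a b * p b a.
  rewrite -sumrB; under eq_bigr => a _ do rewrite -sumrB.
  rewrite exchange_big; apply: eq_bigr => b _; rewrite mulr_sumr; apply: eq_bigr => a _; ring.
rewrite mulr_sumr; apply: ler_sum => b _.
have Hb : `|\sum_a f a b * p b a| <= c.
  apply: le_trans (ler_norm_sum _ _ _) _.
  have -> : c = \sum_a c * p b a by rewrite -mulr_sumr Hp1 mulr1.
  apply: ler_sum => a _; rewrite normrM (ger0_norm (Hp0 b a)).
  by apply: ler_wpM2r => //.
apply: le_trans (ler_norm _) _; rewrite normrM mulrC.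
by apply: ler_wpM2r.
Qed.

Lemma EE_D (R : realType) (S A B : finType) (d : S -> R) (nu : S -> B -> R) (p : S -> B -> A -> R) (Pk : S -> A -> B -> S -> R) (F G : S -> A -> B -> S -> R) :
  EE d nu p Pk (fun s a b s' => F s a b s' + G s a b s') =
  EE d nu p Pk F + EE d nu p Pk G.
Proof.
rewrite /EE -big_split; apply: eq_bigr => s _; rewrite -big_split; apply: eq_bigr => b _.
rewrite -big_split; apply: eq_bigr => a _; rewrite -big_split; apply: eq_bigr => s' _.
by rewrite mulrDr.
Qed.

Theorem mainTheorem3 (R : realType) (S A B : finType) (H : nat)
  (rho0 : S -> R) (P : nat -> S -> A -> B -> S -> R)
  (u r : nat -> S -> A -> B -> R) (eta gamma : R)
  (pi : nat -> S -> B -> A -> R) (nut : nat -> S -> B -> R)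
  (Ut : nat -> S -> A -> B -> R) (Wt : nat -> S -> R) :
  0 < eta -> 0 <= gamma <= 1 ->
  is_distr rho0 ->
  (forall h, (1 <= h <= H)%N -> forall s a b, is_distr (P h s a b)) ->
  (forall h, (1 <= h <= H)%N -> forall s a b, 0 <= u h s a b <= 1) ->
  (forall h, (1 <= h <= H)%N -> forall s a b, 0 <= r h s a b <= 1) ->
  (forall h, (1 <= h <= H)%N -> forall s b, is_distr (pi h s b)) ->
  (forall h, (1 <= h <= H)%N -> forall s, is_distr (nut h s)) ->
  (forall h, (1 <= h <= H)%N -> forall s a b, `|Ut h s a b| <= H%:R) ->
  (forall s a b, Ut H.+1 s a b = 0) ->
  (forall s, Wt H.+1 s = 0) ->
  let nuq := nuqr H P r eta gamma pi in
  let J := Jpi H rho0 P u r eta gamma pi in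
  let E := Etraj H rho0 P r eta gamma pi in
  let TV h := E h (fun s _ _ _ => \sum_(b : B) `|nut h s b - nuq h s b|) in
  (\sum_(s : S) rho0 s * Top pi nut 1 (Ut 1) s - J
     <= \sum_(1 <= h < H.+1)
          E h (fun s a b s' => (Ut h s a b - u h s a b)
                               - Top pi nut h.+1 (Ut h.+1) s')
        + \sum_(1 <= h < H.+1) H%:R * TV h)
  /\
  (\sum_(s : S) rho0 s * Wt 1 s - J
     <= \sum_(1 <= h < H.+1)
          E h (fun s a b s' => (Ut h s a b - u h s a b) - Wt h.+1 s')
        + \sum_(1 <= h < H.+1) E h (fun s _ _ _ => Wt h s - Top pi nut h (Ut h) s)
        + \sum_(1 <= h < H.+1) H%:R * TV h).

Proof.
move=> Heta Hg Hrho HP Hu Hr Hpi Hnut HU HU1 HW1 nuq J E TV.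
pose d := dstate H rho0 P r eta gamma pi.
pose W := Wpi H P u r eta gamma pi.
have N0 : forall h s b, 0 <= nuq h s b by move=> h s b; exact: expR_ge0.
have N1 : forall h, (1 <= h <= H)%N -> forall s, \sum_b nuq h s b = 1.
  move=> h /andP[h1 h2] s.
  have e : (H.+1 - h = (H - h).+1)%N by rewrite subSn.
  have e2 : (H - (H - h) = h)%N by rewrite subKn.
  rewrite /nuq /nuqr /Vqr /Qqr /Vqr e /= e2 subSS.
  move: (Qof P r gamma pi h (Vrem H P r eta gamma pi (H - h)) s) => Q.
  have [b0 _|H0] := pickP (@predT B).
    have Zpos : 0 < \sum_b expR (eta * Q b).
      rewrite (bigD1 b0) //=; apply: lt_le_trans (expR_gt0 (eta * Q b0)) _.
      rewrite lerDl; apply: sumr_ge0 => *; exact: expR_ge0.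
    have Hb : forall b, expR (eta * (Q b - ln (\sum_b expR (eta * Q b)) / eta)) =
              expR (eta * Q b) / \sum_b expR (eta * Q b).
      move=> b; rewrite mulrBr mulrCA divff ?mulr1 ?gt_eqF // expRB lnK //.
    under eq_bigr => b _ do rewrite Hb.
    by rewrite -mulr_suml divff // gt_eqF.
  exfalso; have := Hnut h (introT andP (conj h1 h2)) s => -[_].
  by rewrite big_pred0 // => /eqP; rewrite eq_sym oner_eq0.
have Wdef : forall h, (1 <= h <= H)%N -> W h =
    Top pi nuq h (fun s a b => u h s a b + \sum_s' P h s a b s' * W h.+1 s').
  move=> h /andP[h1 h2].
  have e : (H.+1 - h = (H - h).+1)%N by rewrite subSn.
  have e2 : (H - (H - h) = h)%N by rewrite subKn.
  by rewrite /W /Wpi e /= e2 subSS.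
have WH1 : forall s, W H.+1 s = 0 by move=> s; rewrite /W /Wpi subnn.
have occS : forall h, (1 <= h)%N -> forall s', d h.+1 s' =
    \sum_s \sum_b \sum_a d h s * nuq h s b * pi h s b a * P h s a b s'.
  by case=> [//|h] _ s'.
have d0 : forall h, (1 <= h <= H.+1)%N -> forall s, 0 <= d h s.
  elim=> [//|h IH] /andP[h1 h2] s.
  case: h IH h1 h2 => [_ _ _|h IH _ h2]; first by case: Hrho => + _; apply.
  rewrite occS //; apply: sumr_ge0 => s0 _; apply: sumr_ge0 => b _; apply: sumr_ge0 => a _.
  have hh : (0 < h.+1 <= H)%N by rewrite ltnS in h2; rewrite h2.
  have := (Hpi _ hh s0 b).1 a; have := (HP _ hh s0 a b).1 s.
  have := IH (ltnW h2) s0; have := N0 h.+1 s0 b.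
  move=> *; rewrite !mulr_ge0 //.
have Psum : forall h, (1 <= h <= H)%N -> forall s a b, \sum_s' P h s a b s' = 1.
  by move=> h hh s a b; case: (HP h hh s a b).
have EEh : forall h F, E h F = EE (d h) (nuq h) (pi h) (P h) F by [].
have Econst : forall h, (1 <= h <= H)%N -> forall f : S -> A -> B -> R,
    E h (fun s a b _ => f s a b) = \sum_s d h s * Top pi nuq h f s.
  by move=> h hh f; rewrite EEh EE_const //; exact: Psum.
have Enext : forall h, (1 <= h)%N -> forall g : S -> R,
    E h (fun _ _ _ s' => g s') = \sum_s d h.+1 s * g s.
  by move=> h hh g; rewrite EEh EE_next; apply: eq_bigr => s' _; rewrite occS.
have Estate : forall h, (1 <= h <= H)%N -> forall g : S -> R,
    E h (fun s _ _ _ => g s) = \sum_s d h s * g s.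
  move=> h hh g; rewrite EEh EE_state //; first exact: Psum.
    by move=> s b; case: (Hpi h hh s b).
  exact: N1.
pose T h := Top pi nut h (Ut h).
pose X h := \sum_s d h s * T h s.
pose D h := X h - \sum_s d h s * W h s.
pose ah h := \sum_s d h s * (T h s - Top pi nuq h (Ut h) s).
pose bb h := E h (fun s a b s' => (Ut h s a b - u h s a b) - Top pi nut h.+1 (Ut h.+1) s').
pose Y h := \sum_s d h s * (Wt h s - T h s).
have step : forall h, (1 <= h <= H)%N -> D h = ah h + bb h + D h.+1.
  move=> h hh; have h1 : (1 <= h)%N by case/andP: hh.
  have e1 : bb h = E h (fun s a b _ => Ut h s a b) - E h (fun s a b _ => u h s a b) - X h.+1.
    by rewrite /bb EEh EE_B EE_B -!EEh Enext.
  have e2 : \sum_s d h s * W h s = E h (fun s a b _ => u h s a b) + \sum_s d h.+1 s * W h.+1 s.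
    under eq_bigr => s _ do rewrite Wdef //.
    rewrite -(Econst h hh (fun s a b => u h s a b + \sum_s' P h s a b s' * W h.+1 s')).
    rewrite EEh EE_D -!EEh; congr (_ + _).
    by rewrite EEh EE_PW' -?EEh ?Enext //; exact: Psum.
  have e3 : ah h = X h - E h (fun s a b _ => Ut h s a b).
    by rewrite Econst // /ah /X -sumrB; apply: eq_bigr => s _; rewrite mulrBr.
  rewrite /D e1 e2 e3; ring.
have T0 : forall s, T H.+1 s = 0.
  move=> s; rewrite /T /Top big1 // => a _; rewrite big1 // => b _; by rewrite HU1 !mul0r.
have DH1 : D H.+1 = 0.
  by rewrite /D /X !big1 ?subr0 // => s _; rewrite ?T0 ?WH1 mulr0.
have YH1 : Y H.+1 = 0.
  by rewrite /Y big1 // => s _; rewrite T0 HW1 subr0 mulr0.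
have tel : D 1 = \sum_(1 <= h < H.+1) (ah h + bb h).
  have := telescope_sumr (fun k => - D k) (isT : (1 <= H.+1)%N).
  rewrite (@eq_big_nat _ _ _ _ _ _ (fun h => ah h + bb h)).
    by rewrite DH1 => ->; rewrite oppr0 sub0r opprK.
  by move=> h; rewrite ltnS => hh /=; rewrite (step h hh); ring.
have Ytel : \sum_(1 <= h < H.+1) (Y h - Y h.+1) = Y 1.
  have := telescope_sumr (fun k => - Y k) (isT : (1 <= H.+1)%N).
  rewrite (@eq_big_nat _ _ _ _ _ _ (fun h => Y h - Y h.+1)).
    by rewrite YH1 => ->; rewrite oppr0 sub0r opprK.
  by move=> h _ /=; ring.
have abound : forall h, (1 <= h <= H)%N -> ah h <= H%:R * TV h.
  move=> h hh; rewrite /TV Estate // mulr_sumr; apply: ler_sum => s _.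
  rewrite mulrCA; apply: ler_wpM2l.
    by apply: d0; case/andP: hh => -> /= /leqW.
  rewrite /T /Top; apply: Top_diff.
  - by move=> b a; case: (Hpi h hh s b) => + _; apply.
  - by move=> b; case: (Hpi h hh s b).
  - by move=> a b; apply: HU.
have part1 : D 1 <= \sum_(1 <= h < H.+1) bb h + \sum_(1 <= h < H.+1) H%:R * TV h.
  rewrite tel big_split /= addrC lerD2l; apply: ler_sum_nat => h; rewrite ltnS; exact: abound.
split; first exact: part1.
have eY1 : Y 1 = \sum_s d 1 s * Wt 1 s - X 1.
  by rewrite /Y /X -sumrB; apply: eq_bigr => s _; rewrite mulrBr.
have eL : \sum_s rho0 s * Wt 1 s - J = Y 1 + D 1 by rewrite eY1 /D; rewrite /J /Jpi; ring.
have eS1 : \sum_(1 <= h < H.+1) E h (fun s a b s' => (Ut h s a b - u h s a b) - Wt h.+1 s') =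
    \sum_(1 <= h < H.+1) (bb h - Y h.+1).
  apply: eq_big_nat => h /andP[h1 _].
  rewrite /bb !EEh !EE_B -!EEh !Enext // /Y /X.
  have -> : \sum_s d h.+1 s * (Wt h.+1 s - T h.+1 s) =
    \sum_s d h.+1 s * Wt h.+1 s - \sum_s d h.+1 s * T h.+1 s.
    by rewrite -sumrB; apply: eq_bigr => s _; rewrite mulrBr.
  rewrite /T; ring.
have eS2 : \sum_(1 <= h < H.+1) E h (fun s _ _ _ => Wt h s - Top pi nut h (Ut h) s) =
    \sum_(1 <= h < H.+1) Y h.
  by apply: eq_big_nat => h; rewrite ltnS => hh; rewrite Estate.
rewrite eL eS1 eS2.
have -> : \sum_(1 <= h < H.+1) (bb h - Y h.+1) + \sum_(1 <= h < H.+1) Y h =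
   \sum_(1 <= h < H.+1) bb h + \sum_(1 <= h < H.+1) (Y h - Y h.+1).
  rewrite !sumrB; ring.
rewrite Ytel; lra.
Qed.
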